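(* Let $s\ge1$. The expected number of pierced circles in a random meander graph $\Gamma^1_{2s-1}$ is $\frac{O(s,1)}{C_s^2}$, where $O(s,1)=\binom{2s-2}{1}C_{s-1}^2=(2s-2)C_{s-1}^2$.
   Context: A $p$-string of length $s$ is a correctly matched (balanced) string of $s$ left and $s$ right parentheses; there are $C_s=\frac{1}{s+1}\binom{2s}{s}$ (Catalan number) of them. Given two $p$-strings $U$ (upper) and $W$ (lower) of length $s$, the meander graph $\Gamma^1_{2s-1}$ is obtained by marking points $0,1,\dots,2s$ on the $x$-axis, taking the segment $[0,2s]$, joining points $a,b$ by a semicircle in the upper half-plane for each matched pair of $U$ at positions $a<b$ (positions $1,\dots,2s$), and joining points $a-1,b-1$ by a semicircle in the lower half-plane for each matched pair of $W$ at positions $a<b$; the vertices are the points $1,\dots,2s-1$. The graph has a pierced circle at position $i$ ($1\le i\le 2s-2$) if the vertices $i$ and $i+1$ are joined both by an upper semicircle and by a lower semicircle. A random meander graph is obtained by choosing $(U,W)$ uniformly among the $C_s^2$ pairs. *)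

(* Defs.v *)
From mathcomp Require Import all_boot all_order all_algebra.
Set Implicit Arguments. Unset Strict Implicit. Unset Printing Implicit Defensive.

(* A parenthesis string is a seq bool: true = '(' , false = ')'. *)

Definition balanced (t : seq bool) : bool :=
  all (fun k => count negb (take k t) <= count id (take k t)) (iota 0 (size t).+1)
  && (count id t == count negb t).

(* 1-based positions a < b form a matched pair of t: position a holds '(',
   position b holds ')', and the substring strictly between them is balanced. *)
Definition matched (t : seq bool) (a b : nat) : bool :=
  [&& 0 < a, a < b, b <= size t, nth false t a.-1, ~~ nth false t b.-1
    & balanced (drop a (take b.-1 t))].

Definition pstring (s : nat) := {t : (s.*2).-tuple bool | balanced t}.

Definition catalan (s : nat) : nat := 'C(s.*2, s) %/ s.+1.

(* Meander graph Gamma^1_{2s-1}: upper arc {a,b} for each matched pair (a,b) of U;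
   lower arc {a-1,b-1} for each matched pair (a,b) of W. *)
Definition upper_arc (s : nat) (U : pstring s) (x y : nat) : bool :=
  matched (val U) x y.
Definition lower_arc (s : nat) (W : pstring s) (x y : nat) : bool :=
  matched (val W) x.+1 y.+1.

Definition pierced (s : nat) (U W : pstring s) (i : nat) : bool :=
  [&& 1 <= i, i <= (s.*2) - 2, upper_arc U i i.+1 & lower_arc W i i.+1].

Definition num_pierced (s : nat) (U W : pstring s) : nat :=
  \sum_(1 <= i < (s.*2).-1) pierced U W i.

Definition expected_pierced (s : nat) : rat :=
  ((\sum_(U : pstring s) \sum_(W : pstring s) num_pierced U W)%:R
   / (#|{: pstring s}| ^ 2)%:R)%R.

(* Main.v *)
Require Import Defs.
From mathcomp Require Import all_boot all_order all_algebra.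
From mathcomp Require Import zify.
Set Implicit Arguments. Unset Strict Implicit. Unset Printing Implicit Defensive.

Fixpoint cnt n (P : seq bool -> bool) : nat :=
  if n is n'.+1 then cnt n' (fun t => P (true :: t)) + cnt n' (fun t => P (false :: t))
  else P [::].

Lemma cnt_ext n P Q : (forall t, size t = n -> P t = Q t) -> cnt n P = cnt n Q.
Proof.
elim: n P Q => [|n IH] P Q H /=; first by rewrite H.
by rewrite (IH _ (fun t => Q (true :: t))) ?(IH (fun t => P (false :: t)) (fun t => Q (false :: t))) // => t st; apply: H => /=; rewrite st.
Qed.

Lemma cnt_false n : cnt n (fun _ => false) = 0.
Proof. by elim: n => //= n ->. Qed.

Lemma cnt_andl n (b : bool) P : cnt n (fun t => b && P t) = b * cnt n P.
Proof.
case: b; rewrite ?mul1n ?mul0n; last exact: cnt_false.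
by apply: cnt_ext.
Qed.

Lemma cnt_rcons n P : cnt n.+1 P =
  cnt n (fun t => P (rcons t true)) + cnt n (fun t => P (rcons t false)).
Proof.
elim: n P => [|n IH] P //.
have -> : cnt n.+2 P = cnt n.+1 (fun t => P (true :: t)) + cnt n.+1 (fun t => P (false :: t)) by [].
rewrite (IH (fun t => P (true :: t))) (IH (fun t => P (false :: t))) /=.
by rewrite addnACA.
Qed.

Lemma sum_tuple_cnt n (P : seq bool -> bool) :
  \sum_(t : n.-tuple bool) P t = cnt n P.
Proof.
elim: n P => [|n IH] P.
  rewrite (big_pred1 [tuple]) //= => t; symmetry; apply/eqP/val_inj; by case: t => -[].
rewrite /=  -!IH.
rewrite (reindex (fun p : bool * n.-tuple bool => [tuple of p.1 :: p.2])) /=; last first.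
  exists (fun t : n.+1.-tuple bool => (thead t, [tuple of behead t])).
    by case=> x t _; congr pair; apply: val_inj.
  by move=> t _; case/tupleP: t => x t; apply: val_inj.
rewrite -(pair_big xpredT xpredT (fun x (t : n.-tuple bool) => (P (x :: t) : nat))) /=.
by rewrite big_bool /=.
Qed.

Lemma sum_sig (T : finType) (B : pred T) (F : T -> nat) :
  \sum_(U : {x | B x}) F (val U) = \sum_(x | B x) F x.
Proof.
symmetry.
rewrite (reindex_omap (val : {x | B x} -> T) insub); last first.
  by move=> i Bi; rewrite insubT.
by apply: eq_bigl=> -[i iA]/=; rewrite insubT ?iA /= eqxx.
Qed.

Definition pg (t : seq bool) :=
  all (fun k => count negb (take k t) <= count id (take k t)) (iota 0 (size t).+1).

Fixpoint bal_rec h (t : seq bool) : bool :=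
  match t with
  | [::] => h == 0
  | true :: t => bal_rec h.+1 t
  | false :: t => (0 < h) && bal_rec h.-1 t
  end.

Lemma iotaSm m n : iota m.+1 n = map succn (iota m n).
Proof. by elim: n m => //= n IH m; rewrite IH. Qed.

Lemma count_negb t : count negb t = size t - count id t.
Proof. elim: t => //= x t ->; case: x => /=; have := count_size id t; lia. Qed.

Lemma balE h t :
  (all (fun k => count negb (take k t) <= h + count id (take k t)) (iota 0 (size t).+1)
   && (h + count id t == count negb t)) = bal_rec h t.
Proof.
elim: t h => [|x t IH] h /=; first by rewrite addn0.
rewrite -IH /= iotaSm all_map /= !take0 /=.
case: x => /=.
  congr (_ && _); last by apply/eqP/eqP; lia.
  apply: eq_all => k /=; apply/idP/idP; lia.
case: h => [|h] /=.
  by [].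
rewrite -IH /= !take0 /=.
congr (_ && _).
Qed.

Lemma balancedE t : balanced t = bal_rec 0 t.
Proof. by rewrite -balE. Qed.

Lemma bal_insert h x y : bal_rec h (x ++ true :: false :: y) = bal_rec h (x ++ y).
Proof. by elim: x h => [|[] x IH] h //=; rewrite IH. Qed.

Lemma pg_rcons t x : pg (rcons t x) = pg t && (count negb (rcons t x) <= count id (rcons t x)).
Proof.
rewrite /pg size_rcons -addn1 iotaD all_cat add0n.
set P := (fun k => _ <= _).
have -> : all P (iota 0 (size t).+1) =
  all (fun k => count negb (take k t) <= count id (take k t)) (iota 0 (size t).+1).
  apply: eq_in_all => k; rewrite mem_iota add0n ltnS => hk.
  by rewrite /P -cats1 takel_cat.
by rewrite all_seq1 /P take_oversize ?size_rcons ?addn1.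
Qed.

Lemma pg_total t : pg t -> count negb t <= count id t.
Proof.
move/allP=> /(_ (size t)); rewrite take_size; apply.
by rewrite mem_iota add0n ltnS leqnn.
Qed.

Lemma pg_nil : pg [::]. Proof. by []. Qed.

Definition G n a := cnt n (fun t => pg t && (count id t == a)).

Lemma G0 a : G 0 a = (a == 0) :> nat.
Proof. by case: a. Qed.

Lemma GS n a : G n.+1 a = (0 < a) * G n a.-1 + (n.+1 <= a + a) * G n a.
Proof.
rewrite /G cnt_rcons -!cnt_andl; congr addn; apply: cnt_ext => t st.
  rewrite pg_rcons -cats1 !count_cat /= !addn0.
  case P: (pg t) => /=; last by rewrite !andbF.
  have := pg_total P; rewrite count_negb => h; apply/idP/idP; case/andP => h1 /eqP h2; apply/andP; split; lia.
rewrite pg_rcons -cats1 !count_cat /= !addn0.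
case P: (pg t) => /=; last by rewrite !andbF.
have := pg_total P; rewrite !count_negb; have := count_size id t; rewrite st.
move=> h1 h2; apply/idP/idP.
  case/andP => h3 /eqP h4; apply/andP; split; lia.
case/andP => h3 /eqP h4; apply/andP; split; lia.
Qed.

Lemma Gform n a : G n a * a.+1 = 'C(n, a) * ((a + a).+1 - n).
Proof.
elim: n a => [|n IH] [|k].
- by rewrite G0.
- by rewrite G0 bin0n.
- by rewrite GS /= bin0 subSS sub0n muln0.
rewrite GS /= mul1n binS.
have IH1 := IH k; have IH2 := IH k.+1.
have hb := mul_bin_left n k.
set c := 'C(n, k) in IH1 hb *; set d := 'C(n, k.+1) in IH2 hb *.
set X := G n k in IH1 *; set Y := G n k.+1 in IH2 *.
case: (ltnP n k) => hnk.
  have c0 : c = 0 by rewrite /c bin_small.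
  have d0 : d = 0 by rewrite /d bin_small // ltnW.
  move: IH1 IH2; rewrite c0 d0 !mul0n => h1 h2.
  have X0 : X = 0 by nia.
  have Y0 : Y = 0 by nia.
  by rewrite X0 Y0 muln0 addn0 mul0n.
apply/eqP; rewrite -(eqn_pmul2l (ltn0Sn k)); apply/eqP.
case: (leqP n (k + k).+1) => hn.
  rewrite (_ : n.+1 <= k.+1 + k.+1 = true) ?mul1n; last by apply/idP; lia.
  have [m hm] : exists m, n = k + m by exists (n - k); lia.
  have [u hu] : exists u, k.+1 = m + u by exists (k.+1 - m); lia.
  have e1 : (k + k).+1 - n = u by lia.
  have e2 : (k.+1 + k.+1).+1 - n = u.+2 by lia.
  have e3 : (k.+1 + k.+1).+1 - n.+1 = u.+1 by lia.
  have e4 : n - k = m by lia.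
  rewrite e1 in IH1; rewrite e2 in IH2; rewrite e3; rewrite e4 in hb.
  have h1 : X * k.+1 * k.+2 = c * u * k.+2 by rewrite IH1.
  have h2 : Y * k.+2 * k.+1 = d * u.+2 * k.+1 by rewrite IH2.
  have h3 : k.+1 * d * u.+2 = m * c * u.+2 by rewrite hb.
  have h4 : k.+1 * d * u.+1 = m * c * u.+1 by rewrite hb.
  have h5 : c * k.+1 = c * m + c * u by rewrite hu mulnDr.
  have h6 : c * k.+1 * u = c * m * u + c * u * u by rewrite hu mulnDr mulnDl.
  nia.
rewrite (_ : n.+1 <= k.+1 + k.+1 = false) ?mul0n ?addn0; last by apply/negbTE; lia.
nia.
Qed.

Lemma cnt_insert p n Q :
  cnt (p + n.+2) (fun t => Q (take p t) (drop p.+2 t) && nth false t p && ~~ nth false t p.+1)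
  = cnt (p + n) (fun t => Q (take p t) (drop p t)).
Proof.
elim: p Q => [|p IH] Q.
  rewrite !add0n /=.
  have Z : forall (R : seq bool -> bool), (forall t, R t = false) -> cnt n R = 0.
    move=> R HR; transitivity (cnt n (fun _ => false)); last exact: cnt_false.
    by apply: cnt_ext => t _; exact: HR.
  rewrite (Z (fun t => Q [::] (drop 0 t) && true && false)) ?(Z (fun t => Q [::] (drop 0 t) && false && false)) ?(Z (fun t => Q [::] (drop 0 t) && false && true)); try by move=> t; rewrite ?andbF.
  by rewrite !add0n !addn0; apply: cnt_ext => t _; rewrite take0 !andbT.
rewrite !addSn.
have -> : cnt (p + n.+2).+1 (fun t => Q (take p.+1 t) (drop p.+3 t) && nth false t p.+1 && ~~ nth false t p.+2)
  = cnt (p + n.+2) (fun t => Q (true :: take p t) (drop p.+2 t) && nth false t p && ~~ nth false t p.+1)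
  + cnt (p + n.+2) (fun t => Q (false :: take p t) (drop p.+2 t) && nth false t p && ~~ nth false t p.+1) by [].
rewrite (IH (fun u v => Q (true :: u) v)) (IH (fun u v => Q (false :: u) v)).
by [].
Qed.

Lemma D_cnt s : #|{: pstring s}| = cnt s.*2 balanced.
Proof.
rewrite card_sig -sum1_card big_mkcond /= -(sum_tuple_cnt _ balanced).
by apply: eq_bigr => t _; rewrite inE; case: balanced.
Qed.

Lemma catalanE s : catalan s = #|{: pstring s}|.
Proof.
rewrite D_cnt (cnt_ext (Q := fun t => pg t && (count id t == s))); last first.
  move=> t st; rewrite /balanced -/(pg t) count_negb st.
  case: pg => //=; apply/eqP/eqP; rewrite -addnn; lia.
have := Gform s.*2 s; rewrite (_ : (s + s).+1 - s.*2 = 1) ?muln1; last by rewrite -addnn; lia.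
by rewrite /catalan /G => <-; rewrite mulnK.
Qed.

Lemma sum_matched s j : 0 < j -> j < s.*2 ->
  \sum_(U : pstring s) matched (val U) j j.+1 = #|{: pstring s.-1}|.
Proof.
case: j => // p _ hp.
rewrite (sum_sig (fun t : (s.*2).-tuple bool => balanced t) (fun t => (matched t p.+1 p.+2 : nat))).
rewrite big_mkcond /=.
rewrite (eq_bigr (fun t : (s.*2).-tuple bool => (balanced t && matched t p.+1 p.+2 : nat))); last first.
  by move=> t _; case: balanced.
rewrite (sum_tuple_cnt _ (fun t => balanced t && matched t p.+1 p.+2)).
have e : s.*2 = p + (s.*2 - p.+2).+2 by lia.
rewrite [in cnt s.*2]e.
rewrite (cnt_ext (Q := fun t => bal_rec 0 (take p t ++ drop p.+2 t) && nth false t p && ~~ nth false t p.+1)); last first.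
  move=> t st.
  rewrite /matched /= (_ : drop p.+1 (take p.+1 t) = [::]); last first.
    by apply: drop_oversize; rewrite size_take; case: ifP => // /negbT; rewrite -leqNgt.
  rewrite (_ : p.+2 <= size t = true); last by apply/idP; lia.
  rewrite balancedE.
  have tE : t = take p t ++ nth false t p :: nth false t p.+1 :: drop p.+2 t.
    by rewrite -drop_nth ?st; [rewrite -drop_nth ?cat_take_drop // st|]; lia.
  rewrite [in bal_rec 0 t]tE.
  case: (nth false t p); case: (nth false t p.+1) => /=; rewrite ?andbF ?andbT //.
  by rewrite ltnSn andbT bal_insert.
have H := cnt_insert p (s.*2 - p.+2) (fun u v => bal_rec 0 (u ++ v)).
cbv beta in H; rewrite H.
rewrite D_cnt (_ : (s.-1).*2 = p + (s.*2 - p.+2)); last by lia.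
by apply: cnt_ext => t _; rewrite cat_take_drop balancedE.
Qed.

Theorem proposition3p5 (s : nat) (hs : 1 <= s) :
  expected_pierced s =
  ((((s.*2 - 2) * catalan s.-1 ^ 2)%N)%:R / ((catalan s ^ 2)%N)%:R)%R.
Proof.
rewrite /expected_pierced !catalanE; congr (_%:R / _%:R)%R.
have E : forall U W : pstring s, num_pierced U W =
    \sum_(1 <= i < (s.*2).-1) (matched (val U) i i.+1 * matched (val W) i.+1 i.+2).
  move=> U W; apply: eq_big_nat => i /andP[h1 h2].
  rewrite /pierced /upper_arc /lower_arc h1 (_ : i <= s.*2 - 2 = true) /=; last by apply/idP; lia.
  by case: matched; case: matched.
under eq_bigr => U _ do under eq_bigr => W _ do rewrite E.
under eq_bigr => U _ do rewrite exchange_big.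
rewrite exchange_big /=.
rewrite (eq_big_nat _ _ (F2 := fun _ => #|{: pstring s.-1}| * #|{: pstring s.-1}|)).
  by rewrite sum_nat_const_nat mulnn; congr (_ * _); lia.
move=> i /andP[h1 h2].
rewrite -big_distrlr sum_matched ?sum_matched //; lia.
Qed.
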